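(* For $n\geqslant1$, $m\geqslant0$, let $\mathfrak{g}_{n,m}$ be the number of inversion sequences of length $n$ avoiding both $010$ and $120$ with maximum value $m$ (so $\mathfrak{g}_{n,0}=1$). Then for all $n\geqslant 1$ and $m\geqslant1$, $$\mathfrak{g}_{n,m}=\sum_{p=m+1}^{n}\sum_{j=0}^{m-1}\mathfrak{g}_{p-1,j}\cdot\mathfrak{e}_{n-p,\,m-j},$$ where $\mathfrak{e}_{a,b}$ is the number of words of length $a$ over an alphabet $\{1,\dots,b\}$ avoiding $010$ and $120$ (with $\mathfrak{e}_{0,b}=1$, counting the empty word).
   Context: An inversion sequence of length $n$ is a sequence $(\sigma_1,\dots,\sigma_n)$ of integers with $0\leqslant\sigma_i<i$. A sequence contains a pattern $p$ if some subsequence is order-isomorphic to $p$; otherwise it avoids $p$. Avoiding $010$: no $i<j<l$ with $\sigma_i=\sigma_l<\sigma_j$. Avoiding $120$: no $i<j<l$ with $\sigma_l<\sigma_i<\sigma_j$. *)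

(* Defs.v *)
From mathcomp Require Import all_boot.
Set Implicit Arguments. Unset Strict Implicit. Unset Printing Implicit Defensive.

(* s is an inversion sequence: (1-indexed) 0 <= sigma_i < i. *)
Definition is_inv_seq (s : seq nat) : bool :=
  [forall i : 'I_(size s), nth 0 s i < i.+1].

Definition avoids010 (s : seq nat) : bool :=
  [forall i : 'I_(size s), forall j : 'I_(size s), forall l : 'I_(size s),
     ((i < j) && (j < l)) ==>
     ~~ ((nth 0 s i == nth 0 s l) && (nth 0 s l < nth 0 s j))].

Definition avoids120 (s : seq nat) : bool :=
  [forall i : 'I_(size s), forall j : 'I_(size s), forall l : 'I_(size s),
     ((i < j) && (j < l)) ==>
     ~~ ((nth 0 s l < nth 0 s i) && (nth 0 s i < nth 0 s j))].

Definition seq_max (s : seq nat) : nat := foldr maxn 0 s.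

(* g n m : number of inversion sequences of length n avoiding 010 and 120
   with maximum value m (entries of an inversion sequence of length n lie in 'I_n). *)
Definition g_count (n m : nat) : nat :=
  #|[set t : n.-tuple 'I_n |
      let s := map (@nat_of_ord n) t in
      [&& is_inv_seq s, avoids010 s, avoids120 s & seq_max s == m]]|.

(* e a b : number of words of length a over a b-letter alphabet avoiding 010
   and 120.  The alphabet is {0,...,b-1} instead of {1,...,b}; pattern
   avoidance is invariant under this order-preserving relabelling. *)
Definition e_count (a b : nat) : nat :=
  #|[set t : a.-tuple 'I_b |
      let s := map (@nat_of_ord b) t in avoids010 s && avoids120 s]|.

(* Main.v *)
Require Import Defs.
From mathcomp Require Import all_boot zify.
Set Implicit Arguments. Unset Strict Implicit. Unset Printing Implicit Defensive.

Fixpoint words (n b : nat) : seq (seq nat) :=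
  if n is n'.+1 then [seq x :: w | x <- iota 0 b, w <- words n' b] else [:: [::]].

Lemma countE (T : Type) (P : pred T) (L : seq T) : count P L = \sum_(x <- L) P x.
Proof. by elim: L => [|x L IH]; rewrite ?big_nil ?big_cons //= IH. Qed.

Lemma count_andl (T : Type) (b : bool) (P : pred T) (L : seq T) :
  count (fun x => b && P x) L = b * count P L.
Proof. by case: b => /=; rewrite ?mul1n ?mul0n ?count_pred0. Qed.

Lemma sum_count_mul (T : Type) (P : pred T) (L : seq T) c :
  \sum_(x <- L) P x * c = count P L * c.
Proof. by elim: L => [|x L IH]; rewrite ?big_nil ?big_cons //= IH mulnDl. Qed.

Lemma count_words_cons n b (P : pred (seq nat)) :
  count P (words n.+1 b) = \sum_(x <- iota 0 b) count (fun w => P (x :: w)) (words n b).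
Proof.
rewrite countE /= big_allpairs_dep; apply: eq_bigr => x _; by rewrite countE.
Qed.

Lemma mem_words n b s : (s \in words n b) = (size s == n) && all (fun x => x < b) s.
Proof.
elim: n s => [|n IH] [|x s] //=.
- apply/negbTE/allpairsPdep; by case=> [x' [w' [_ _]]].
- apply/allpairsPdep/idP.
  + case=> [x' [w' [Hx Hw [-> ->]]]]; move: Hw; rewrite IH; rewrite mem_iota in Hx.
    by case/andP=> /eqP-> ->; rewrite eqxx andbT /=; lia.
  + case/and3P=> Hs Hx Ha; exists x, s; split=> //; first by rewrite mem_iota; lia.
    by rewrite IH -eqSS Hs.
Qed.

Lemma fubini a k N (F : seq nat -> seq nat -> bool) :
  count (fun s => F (take a s) (drop a s)) (words (a + k) N) =
  \sum_(u <- words a N) count (F u) (words k N).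
Proof.
elim: a F => [|a IH] F.
  rewrite /= big_cons big_nil addn0; apply: eq_count => s; by rewrite take0 drop0.
rewrite addSn count_words_cons /= big_allpairs_dep; apply: eq_bigr => x _.
by rewrite (IH (fun u w => F (x :: u) w)).
Qed.

Lemma sum_iota_range N k b (F : nat -> nat) : k + b <= N ->
  \sum_(x <- iota 0 N) (k <= x < k + b) * F x = \sum_(y <- iota 0 b) F (k + y).
Proof.
move=> H; have -> : N = k + (b + (N - (k + b))) by lia.
rewrite !iotaD !big_cat /= big1_seq; last first.
  move=> x /andP[_]; rewrite mem_iota => Hx; have -> : (k <= x < k + b) = false by lia.
  by [].
rewrite add0n [X in _ + X]big1_seq; last first.
  move=> x /andP[_]; rewrite mem_iota => Hx; have -> : (k <= x < k + b) = false by lia.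
  by [].
rewrite addn0 add0n.
have -> : iota k b = map (addn k) (iota 0 b) by rewrite -iotaDl addn0.
rewrite big_map; apply: eq_big_seq => y; rewrite mem_iota => Hy.
have -> : (k <= k + y < k + b) = true by lia. by rewrite mul1n.
Qed.

Lemma shift_count c N k b (P : pred (seq nat)) : k + b <= N ->
  count (fun v => all (fun x => k <= x < k + b) v && P v) (words c N) =
  count (fun v => P (map (addn k) v)) (words c b).
Proof.
move=> H; elim: c P => [|c IH] P; first by [].
rewrite !count_words_cons.
transitivity (\sum_(x <- iota 0 N) (k <= x < k + b) *
   count (fun w => all (fun x => k <= x < k + b) w && P (x :: w)) (words c N)).
  apply: eq_bigr => x _; rewrite -count_andl; apply: eq_count => w /=; by rewrite andbA.
rewrite (sum_iota_range (fun x => count (fun w => all (fun x => k <= x < k + b) w && P (x :: w)) (words c N))) //.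
apply: eq_bigr => y _; by rewrite IH.
Qed.

Lemma head_count c N m (B : pred (seq nat)) : m < N ->
  count (fun w => (nth 0 w 0 == m) && B (behead w)) (words c.+1 N) = count B (words c N).
Proof.
move=> H; rewrite count_words_cons.
transitivity (\sum_(x <- iota 0 N) (m <= x < m + 1) * count B (words c N)).
  apply: eq_bigr => x _; rewrite -count_andl; apply: eq_count => w /=.
  by congr (_ && _); lia.
rewrite (sum_iota_range (fun x => count B (words c N))) ?addn1 //.
by rewrite /= big_cons big_nil !addn0.
Qed.

Lemma uniq_words n b : uniq (words n b).
Proof.
elim: n => [|n IH] //=.
apply: allpairs_uniq_dep => //; first exact: iota_uniq.
move=> [x1 w1] [x2 w2] _ _ /= [e1 e2]; subst; done.
Qed.

Lemma map_val_pmap b (s : seq nat) : all (fun x => x < b) s ->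
  map (@nat_of_ord b) (pmap insub s) = s.
Proof.
elim: s => //= x s IH /andP[Hx Hs]; by rewrite insubT /= IH.
Qed.

Lemma card_tuple_words n b (P : pred (seq nat)) :
  #|[set t : n.-tuple 'I_b | P (map (@nat_of_ord b) t)]| = count P (words n b).
Proof.
rewrite cardsE cardE /enum_mem size_filter.
rewrite (eq_count (a2 := preim (fun t : n.-tuple 'I_b => map (@nat_of_ord b) t) P)) //.
rewrite -count_map; apply/permP; apply: uniq_perm.
- rewrite map_inj_uniq -?enumT ?enum_uniq //.
  move=> t1 t2 H; apply: val_inj; exact: (inj_map val_inj H).
- exact: uniq_words.
- move=> s; rewrite mem_words; apply/mapP/idP.
  + case=> t _ ->; rewrite size_map size_tuple eqxx /=.
    by apply/allP=> x /mapP[y _ ->].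
  + case/andP=> /eqP Hs Ha.
    have Hsz : size (pmap (@insub _ _ 'I_b) s) == n by rewrite -(size_map (@nat_of_ord b)) map_val_pmap // Hs.
    exists (Tuple Hsz); first by rewrite -enumT mem_enum.
    by rewrite /= map_val_pmap.
Qed.

Definition avoidQ (Q : nat -> nat -> nat -> bool) (s : seq nat) : bool :=
  [forall i : 'I_(size s), forall j : 'I_(size s), forall l : 'I_(size s),
     ((i < j) && (j < l)) ==> ~~ Q (nth 0 s i) (nth 0 s j) (nth 0 s l)].
Definition Q010 a b c := (a == c) && (c < b).
Definition Q120 a b c := (c < a) && (a < b).
Lemma av010 s : avoids010 s = avoidQ Q010 s. Proof. by []. Qed.
Lemma av120 s : avoids120 s = avoidQ Q120 s. Proof. by []. Qed.

Lemma avoidQP Q s : reflect (forall i j l, i < j -> j < l -> l < size s ->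
   ~~ Q (nth 0 s i) (nth 0 s j) (nth 0 s l)) (avoidQ Q s).
Proof.
apply: (iffP idP).
- move=> H i j l ij jl ls.
  move: H => /forallP/(_ (Ordinal (ltn_trans ij (ltn_trans jl ls)))).
  move=> /forallP/(_ (Ordinal (ltn_trans jl ls)))/forallP/(_ (Ordinal ls)).
  by rewrite /= ij jl.
- move=> H; apply/forallP=> i; apply/forallP=> j; apply/forallP=> l.
  apply/implyP=> /andP[ij jl]; exact: H.
Qed.

Lemma avoid_catl Q u w : avoidQ Q (u ++ w) -> avoidQ Q u.
Proof.
move/avoidQP=> H; apply/avoidQP=> i j l ij jl ls.
have := H i j l ij jl; rewrite size_cat !nth_cat ls.
have -> : i < size u by lia. have -> : j < size u by lia.
by apply; lia.
Qed.

Lemma avoid_catr Q u w : avoidQ Q (u ++ w) -> avoidQ Q w.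
Proof.
move/avoidQP=> H; apply/avoidQP=> i j l ij jl ls.
have := H (size u + i) (size u + j) (size u + l); rewrite size_cat !nth_cat.
have -> : (size u + i < size u) = false by lia.
have -> : (size u + j < size u) = false by lia.
have -> : (size u + l < size u) = false by lia.
rewrite !addKn; apply; lia.
Qed.

Lemma mem_nthN (s : seq nat) i : i < size s -> nth 0 s i \in s.
Proof. exact: mem_nth. Qed.

Lemma avoid_cat Q u w : avoidQ Q u -> avoidQ Q w ->
  (forall a b c, a \in u -> b \in u ++ w -> c \in w -> ~~ Q a b c) ->
  avoidQ Q (u ++ w).
Proof.
move=> /avoidQP Hu /avoidQP Hw Hx; apply/avoidQP=> i j l ij jl; rewrite size_cat => ls.
case: (ltnP l (size u)) => Hl.
  rewrite !nth_cat Hl; have -> : i < size u by lia. have -> : j < size u by lia.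
  exact: Hu.
case: (ltnP i (size u)) => Hi.
  apply: Hx.
  - by rewrite nth_cat Hi mem_nthN.
  - by apply: mem_nthN; rewrite size_cat; lia.
  - by rewrite nth_cat ltnNge Hl /=; apply: mem_nthN; lia.
rewrite !nth_cat.
have -> : (j < size u) = false by lia.
have -> : (i < size u) = false by lia.
have -> : (l < size u) = false by lia.
apply: Hw; lia.
Qed.

Lemma avoid_map Q k s : (forall a b c, Q (k + a) (k + b) (k + c) = Q a b c) ->
  avoidQ Q (map (addn k) s) = avoidQ Q s.
Proof.
move=> HQ; apply/avoidQP/avoidQP; rewrite size_map => H i j l ij jl ls.
- have := H i j l ij jl ls; rewrite !(nth_map 0) ?HQ //; lia.
- rewrite !(nth_map 0) ?HQ; try lia; exact: H.
Qed.

Lemma is_invP s : reflect (forall i, i < size s -> nth 0 s i <= i) (is_inv_seq s).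
Proof.
apply: (iffP forallP).
- move=> H i Hi; have := H (Ordinal Hi); by [].
- move=> H i; have := H i (ltn_ord i); by [].
Qed.

Lemma inv_catl u w : is_inv_seq (u ++ w) -> is_inv_seq u.
Proof.
move/is_invP=> H; apply/is_invP=> i Hi; have := H i; rewrite size_cat nth_cat Hi.
apply; lia.
Qed.

Lemma inv_cat u w : is_inv_seq u -> all (fun x => x <= size u) w -> is_inv_seq (u ++ w).
Proof.
move=> /is_invP Hu /allP Hw; apply/is_invP=> i; rewrite size_cat nth_cat.
case: ifP => Hi _; first exact: Hu.
have : nth 0 w (i - size u) <= size u.
  case: (ltnP (i - size u) (size w)) => H; first by apply: Hw; apply: mem_nth.
  by rewrite nth_default.
lia.
Qed.

Lemma inv_all s : is_inv_seq s -> all (fun x => x < size s) s.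
Proof.
move/is_invP=> H; apply/(all_nthP 0) => i Hi; have := H i Hi; lia.
Qed.

Lemma seq_max_cat u w : seq_max (u ++ w) = maxn (seq_max u) (seq_max w).
Proof.
rewrite /seq_max foldr_cat; elim: u => [|x u IH] /=; first by rewrite max0n.
by rewrite IH maxnA.
Qed.

Lemma seq_max_leq s k : (seq_max s <= k) = all (fun x => x <= k) s.
Proof. elim: s => //= x s IH; by rewrite geq_max IH. Qed.

Lemma leq_seq_max s x : x \in s -> x <= seq_max s.
Proof.
move=> Hx; have : seq_max s <= seq_max s by [].
by rewrite seq_max_leq => /allP; apply.
Qed.

Lemma seq_max_mem s : s != [::] -> seq_max s \in s.
Proof.
elim: s => // x s IH _.
have E : seq_max (x :: s) = maxn x (seq_max s) by [].
rewrite E; case: s IH E => [|y s] IH E; first by rewrite /seq_max /= maxn0 mem_seq1.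
case: (leqP x (seq_max (y :: s))) => H.
  by rewrite inE IH ?orbT.
by rewrite inE eqxx.
Qed.

Lemma notin_take_index (x : nat) s : x \notin take (index x s) s.
Proof.
elim: s => //= y s IH; case: eqP => //= /eqP Hyx.
by rewrite inE negb_or eq_sym Hyx.
Qed.

Definition Av (s : seq nat) := avoids010 s && avoids120 s.
Definition Gp (m : nat) (s : seq nat) :=
  [&& is_inv_seq s, avoids010 s, avoids120 s & seq_max s == m].
Definition Bp m j v := all (fun x => j.+1 <= x < j.+1 + (m - j)) v && Av v.
Definition Gw m j w := (nth 0 w 0 == m) && Bp m j (behead w).
Definition Fp m j u w := Gp j u && Gw m j w.

Lemma nth_pivot u m v i : nth 0 (u ++ m :: v) i =
  if i < size u then nth 0 u i else if i == size u then m else nth 0 v (i - (size u).+1).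
Proof.
rewrite nth_cat; case: ltnP => // H; case: eqP => [->|Hne]; first by rewrite subnn.
have -> : i - size u = (i - (size u).+1).+1 by lia. by [].
Qed.

Lemma avoid_split Q u m v j :
  (forall a b c, a < c -> ~~ Q a b c) -> (forall a b c, b <= a -> ~~ Q a b c) ->
  avoidQ Q u -> avoidQ Q v -> all (fun y => y <= j) u -> j < m ->
  all (fun y => j < y <= m) v -> avoidQ Q (u ++ m :: v).
Proof.
move=> H1 H2 Au Av' /allP Hu Hjm /allP Hv.
apply: avoid_cat => //.
  rewrite -cat1s; apply: avoid_cat => //.
    by apply/avoidQP => i j' l; rewrite /=; lia.
  move=> a b c; rewrite mem_seq1 => /eqP -> Hb Hc; apply: H2.
  move: Hb; rewrite /= inE => /orP[/eqP -> //|/Hv]; lia.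
move=> a b c /Hu Ha _; rewrite inE => /orP[/eqP ->|/Hv Hc]; apply: H1; lia.
Qed.

Lemma Q010_1 a b c : a < c -> ~~ Q010 a b c.
Proof. rewrite /Q010 => H; apply/negP => /andP[/eqP E _]; lia. Qed.
Lemma Q010_2 a b c : b <= a -> ~~ Q010 a b c.
Proof. rewrite /Q010 => H; apply/negP => /andP[/eqP E H']; lia. Qed.
Lemma Q120_1 a b c : a < c -> ~~ Q120 a b c.
Proof. rewrite /Q120 => H; apply/negP => /andP[H' _]; lia. Qed.
Lemma Q120_2 a b c : b <= a -> ~~ Q120 a b c.
Proof. rewrite /Q120 => H; apply/negP => /andP[_ H']; lia. Qed.

Lemma key m j a s : m <= a -> a < size s -> j < m ->
  Fp m j (take a s) (drop a s) = [&& Gp m s, a == index m s & j == seq_max (take a s)].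
Proof.
move=> Ha Hsa Hj.
have Es : s = take a s ++ nth 0 s a :: drop a.+1 s by rewrite -drop_nth // cat_take_drop.
have Hu : size (take a s) = a by rewrite size_take Hsa.
rewrite /Fp /Gw /Bp (drop_nth 0 Hsa) /=.
have Hr : (fun y => j.+1 <= y < j.+1 + (m - j)) =1 (fun y => j < y <= m) by move=> y /=; lia.
rewrite (eq_all Hr).
move: Es Hu; set u := take a s; set v := drop a.+1 s; set x := nth 0 s a => Es Hu.
apply/idP/idP.
- case/andP=> /and4P[iu a1u a2u /eqP mu] /andP[/eqP xm /andP[allv /andP[a1v a2v]]].
  have mnu : m \notin u by apply/negP => /leq_seq_max; rewrite mu; lia.
  have Es' : s = u ++ m :: v by rewrite {1}Es xm.
  have uj : all (fun y => y <= j) u by rewrite -seq_max_leq mu.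
  rewrite Es' index_pivot // Hu mu !eqxx !andbT /Gp.
  apply/and4P; split.
  + apply: inv_cat => //=; rewrite Hu Ha /=; apply/allP => y /(allP allv); lia.
  + rewrite av010; apply: (avoid_split (j := j)) => //; [exact: Q010_1|exact: Q010_2].
  + rewrite av120; apply: (avoid_split (j := j)) => //; [exact: Q120_1|exact: Q120_2].
  + rewrite seq_max_cat /=; have : seq_max v <= m.
      by rewrite seq_max_leq; apply/allP => y /(allP allv); lia.
    rewrite mu => H; apply/eqP; lia.
- case/and3P=> /and4P[isv a1 a2 /eqP ms] /eqP ai /eqP ju.
  have ms' : m \in s by rewrite -index_mem -ai.
  have xm : x = m by rewrite /x ai nth_index.
  have mnu : m \notin u by rewrite /u ai notin_take_index.
  have Es' : s = u ++ m :: v by rewrite {1}Es xm.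
  rewrite xm eqxx /=.
  have Ave : avoids010 v && avoids120 v.
    move: a1 a2; rewrite Es' !av010 !av120 => /avoid_catr /(avoid_catr (u := [:: m])) ->.
    by move/avoid_catr/(avoid_catr (u := [:: m])).
  rewrite /Av Ave andbT; apply/andP; split.
    move: isv a1 a2; rewrite /Gp Es' !av010 !av120 => /inv_catl -> /avoid_catl -> /avoid_catl ->.
    by rewrite -ju eqxx.
  have jinu : j \in u by rewrite ju; apply: seq_max_mem; apply/negP => /eqP E;
    move: Hu; rewrite E /=; lia.
  apply/allP => y yv.
  have ym : y <= m by rewrite -ms; apply: leq_seq_max; rewrite Es' mem_cat inE yv !orbT.
  rewrite ym andbT ltnNge; apply/negP => yj.
  have i1 : index j u < @size nat u by rewrite index_mem.
  have Hn1 : nth 0 s (index j u) = j by rewrite Es' nth_pivot i1 nth_index.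
  have Hn2 : nth 0 s a = m by rewrite Es' nth_pivot -Hu ltnn eqxx.
  have Hn3 : nth 0 s (a.+1 + index y v) = y.
    rewrite Es' nth_pivot -Hu.
    have -> : (size u).+1 + index y v < size u = false by lia.
    have -> : ((size u).+1 + index y v == size u) = false by lia.
    by rewrite addKn nth_index.
  have Hiy : index y v < @size nat v by rewrite index_mem.
  have Hsz : a.+1 + index y v < size s by rewrite Es' size_cat /= -Hu; lia.
  move: yj; rewrite leq_eqVlt => /orP[/eqP yj|yj].
  + move: a1; rewrite av010 => /avoidQP/(_ (index j u) a (a.+1 + index y v)).
    rewrite Hn1 Hn2 Hn3 /Q010.
    have -> : (j == y) = true by apply/eqP.
    have -> : (y < m) = true by lia.
    move=> H; have : false; last by []. apply: H; lia.
  + move: a2; rewrite av120 => /avoidQP/(_ (index j u) a (a.+1 + index y v)).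
    rewrite Hn1 Hn2 Hn3 /Q120 yj Hj /= => H; have : false; last by []. apply: H; lia.
Qed.

Lemma Gp_bounds m s : 1 <= m -> Gp m s ->
  m <= index m s < size s /\ seq_max (take (index m s) s) < m.
Proof.
move=> Hm /and4P[isv _ _ /eqP ms].
have sn : s != [::] by apply/negP => /eqP E; move: ms; rewrite E /seq_max /=; lia.
have ms' : m \in s by rewrite -{1}ms seq_max_mem.
have Hi : index m s < @size nat s by rewrite index_mem.
have Hmi : m <= index m s.
  by move/is_invP: isv => /(_ _ Hi); rewrite nth_index.
split; first by rewrite Hmi Hi.
have Hle : seq_max (take (index m s) s) <= m.
  rewrite seq_max_leq; apply/allP => y /mem_take Hy; rewrite -ms; exact: leq_seq_max.
have Hne : seq_max (take (index m s) s) != m.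
  apply/negP => /eqP E; have := notin_take_index m s; rewrite -{1}E seq_max_mem //.
  apply/negP => /eqP E'; have := size_take (index m s) s; rewrite E' Hi /=; lia.
lia.
Qed.

Lemma sum_ord_eq1 m J : J < m -> \sum_(j < m) (nat_of_ord j == J) = 1.
Proof.
move=> H; rewrite (bigD1 (Ordinal H)) //= eqxx big1 // => j.
by rewrite -val_eqE /= => /negbTE ->.
Qed.

Lemma sum_nat_eq1 lo hi x : lo <= x < hi -> \sum_(lo <= p < hi) (p == x) = 1.
Proof.
move=> /andP[H1 H2].
rewrite (big_cat_nat H1 (ltnW H2)) /= (big_cat_nat (leqnSn x) H2) /= big_nat1 eqxx.
rewrite big1_seq; last by move=> p /andP[_]; rewrite mem_index_iota => Hp; case: eqP => //; lia.
rewrite [X in _ + (_ + X)]big1_seq //.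
by move=> p /andP[_]; rewrite mem_index_iota => Hp; case: eqP => //; lia.
Qed.

Lemma Gp_sum n m s : 1 <= m -> size s = n ->
  (Gp m s : nat) = \sum_(m.+1 <= p < n.+1) \sum_(j < m) (Fp m j (take p.-1 s) (drop p.-1 s) : nat).
Proof.
move=> Hm Hs.
rewrite (eq_big_nat _ _ (F2 := fun p => \sum_(j < m) ([&& Gp m s, p.-1 == index m s & nat_of_ord j == seq_max (take p.-1 s)] : nat))); last first.
  move=> p Hp; apply: eq_bigr => j _; rewrite key //; lia.
case G: (Gp m s); last first.
  by rewrite big1 // => p _; rewrite big1.
have [/andP[B1 B2] B3] := Gp_bounds Hm G.
rewrite (eq_big_nat _ _ (F2 := fun p => (p == (index m s).+1 : nat))).
  rewrite sum_nat_eq1 //; lia.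
move=> p Hp; case: eqP => Ep /=.
  have -> : p == (index m s).+1 by apply/eqP; lia.
  by rewrite Ep sum_ord_eq1.
have -> : p == (index m s).+1 = false by apply/eqP; lia.
by rewrite big1.
Qed.

Lemma gE n m : g_count n m = count (Gp m) (words n n).
Proof. exact: card_tuple_words. Qed.

Lemma eE a b : e_count a b = count Av (words a b).
Proof. exact: card_tuple_words. Qed.

Lemma Av_map k v : Av (map (addn k) v) = Av v.
Proof.
rewrite /Av !av010 !av120 !avoid_map // => x y z.
- by rewrite /Q120 !ltn_add2l.
- by rewrite /Q010 eqn_add2l ltn_add2l.
Qed.

Theorem mainTheorem7 (n m : nat) : 1 <= n -> 1 <= m ->
  g_count n m =
  \sum_(m.+1 <= p < n.+1) \sum_(j < m) g_count p.-1 j * e_count (n - p) (m - j).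
Proof.
move=> Hn Hm.
rewrite gE countE.
transitivity (\sum_(s <- words n n) \sum_(m.+1 <= p < n.+1) \sum_(j < m)
    (Fp m j (take p.-1 s) (drop p.-1 s) : nat)).
  apply: eq_big_seq => s; rewrite mem_words => /andP[/eqP Hs _]; exact: Gp_sum.
rewrite exchange_big; apply: eq_big_nat => p Hp.
rewrite exchange_big; apply: eq_bigr => j _; have jm := ltn_ord j.
rewrite -countE.
have En : words n n = words (p.-1 + (n - p).+1) n by congr words; lia.
rewrite En fubini.
transitivity (\sum_(u <- words p.-1 n) Gp j u * count (Gw m j) (words (n - p).+1 n)).
  by apply: eq_bigr => u _; rewrite /Fp count_andl.
rewrite sum_count_mul /Gw head_count; last lia.
rewrite /Bp (shift_count _ Av); last lia.
rewrite (eq_count (a1 := fun v => Av (map (addn j.+1) v)) (a2 := Av)); last by move=> v; rewrite Av_map.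
rewrite eE gE; congr (_ * _).
transitivity (count (fun v => all (fun x => 0 <= x < 0 + p.-1) v && Gp j v) (words p.-1 n)).
  apply: eq_in_count => v; rewrite mem_words => /andP[/eqP Hv _] /=.
  case G: (Gp j v); rewrite ?andbF ?andbT //.
  move: G => /and4P[/inv_all + _ _ _]; rewrite Hv.
  by move=> ->.
rewrite (shift_count (k := 0) _ (Gp j)); last lia.
apply: eq_count => v /=; congr (Gp j _).
by elim: v => //= x v ->.
Qed.
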